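(* Let $R$ be an associative ring with identity $1$ and an involution $*$, and let $p,q\in R$ be projections. Then the following are equivalent: (1) $p(1-q)$ and $(1-p)q$ are both MP invertible; (2) $p-q$ is MP invertible.
   Context: An involution on $R$ is a map $a\mapsto a^*$ with $(a^* )^*=a$, $(a+b)^*=a^*+b^*$, $(ab)^*=b^*a^*$. An element $a$ is MP invertible if there is $b$ with $aba=a$, $bab=b$, $(ab)^*=ab$, $(ba)^*=ba$; this $b$ is unique and written $a^{\dagger}$. A projection is an element $p$ with $p^2=p=p^*$. *)

(* Defs.v *)
From mathcomp Require Import all_boot all_algebra.
Set Implicit Arguments. Unset Strict Implicit. Unset Printing Implicit Defensive.
Import GRing.Theory.
Local Open Scope ring_scope.

Definition involution (R : pzRingType) (star : R -> R) : Prop :=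
  [/\ forall a, star (star a) = a,
      forall a b, star (a + b) = star a + star b
    & forall a b, star (a * b) = star b * star a].

Definition is_MP_inverse (R : pzRingType) (star : R -> R) (a b : R) : Prop :=
  [/\ a * b * a = a, b * a * b = b, star (a * b) = a * b & star (b * a) = b * a].

Definition MP_invertible (R : pzRingType) (star : R -> R) (a : R) : Prop :=
  exists b, is_MP_inverse star a b.

Definition projection (R : pzRingType) (star : R -> R) (p : R) : Prop :=
  p * p = p /\ star p = p.

(* Main.v *)
Require Import Defs.
From mathcomp Require Import all_boot all_algebra.
Local Open Scope ring_scope.
Import GRing.Theory.

Section S.
Variable R : pzRingType.
Variable star : R -> R.
Hypothesis Hs : involution star.

Lemma sK a : star (star a) = a. Proof. by case: Hs. Qed.
Lemma sD a b : star (a + b) = star a + star b. Proof. by case: Hs. Qed.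
Lemma sM a b : star (a * b) = star b * star a. Proof. by case: Hs. Qed.
Lemma s0 : star 0 = 0.
Proof. apply: (addrI (star 0)); by rewrite -sD !addr0. Qed.
Lemma sN a : star (- a) = - star a.
Proof. apply: (addrI (star a)); by rewrite -sD !subrr s0. Qed.
Lemma s1 : star 1 = 1.
Proof. have := sM (star 1) 1; rewrite mulr1 !sK mulr1 => h; by rewrite -h. Qed.
Lemma sB a b : star (a - b) = star a - star b.
Proof. by rewrite sD sN. Qed.

Lemma herm_comm a b : star a = a -> is_MP_inverse star a b -> a * b = b * a.
Proof.
move=> Ha [H1 H2 H3 H4].
have e1 : a*b = star b * a by rewrite -H3 sM Ha.
have e2 : b*a = a * star b by rewrite -H4 sM Ha.
have e3 : a*b = a*b*(b*a).
  by rewrite {2}e1 !mulrA -(mulrA (star b) a b) -(mulrA _ (a*b) a) H1 -e1.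
have e4 : b*a = a*b*(b*a).
  by rewrite {2}e2 mulrA H1 -e2.
by rewrite e3 -e4.
Qed.

Lemma comm_e a b c d : star a = a -> is_MP_inverse star a b ->
  star c = c -> star d = d -> c * a = a * d -> d * a = a * c ->
  c * (a * b) = (a * b) * c.
Proof.
move=> Ha Hb Hc Hd E1 E2.
have [H1 H2 H3 H4] := Hb.
have h1 : c * (a * b) = a * b * c * (a * b).
  have L : c*(a*b) = a*d*b by rewrite mulrA E1.
  have Rr : a*b*c*(a*b) = a*d*b by rewrite mulrA -(mulrA (a*b) c a) E1 (mulrA (a*b) a d) H1.
  by rewrite L Rr.
have h2 := f_equal star h1.
have s1' : star (c*(a*b)) = a*b*c by rewrite sM H3 Hc.
have s2' : star (a*b*c*(a*b)) = a*b*c*(a*b) by rewrite sM H3 sM H3 Hc mulrA.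
rewrite s1' s2' in h2.
by rewrite h1 -h2.
Qed.

Lemma comm_b a b c d : star a = a -> is_MP_inverse star a b ->
  star c = c -> star d = d -> c * a = a * d -> d * a = a * c ->
  c * b = b * d.
Proof.
move=> Ha Hb Hc Hd E1 E2.
have ce := comm_e a b c d Ha Hb Hc Hd E1 E2.
have de := comm_e a b d c Ha Hb Hd Hc E2 E1.
have ab := herm_comm a b Ha Hb.
have [H1 H2 H3 H4] := Hb.
have bb : b = a * b * b by rewrite ab.
have step1 : c*b = c*(a*b)*b by rewrite -mulrA -bb.
rewrite step1 ce.
have -> : a*b*c*b = b*(d*(a*b)) by rewrite (mulrA d a b) E2 ab !mulrA.
by rewrite de !mulrA H2.
Qed.
End S.

Section T.
Variable R : pzRingType.
Variable star : R -> R.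
Hypothesis Hs : involution star.

Lemma MP_cut a b c d : star a = a -> is_MP_inverse star a b ->
  star c = c -> star d = d -> c * c = c -> c * a = a * d -> d * a = a * c ->
  is_MP_inverse star (c * a) (b * c).
Proof.
move=> Ha Hb Hc Hd Hcc E1 E2.
have ce := @comm_e R star Hs a b c d Ha Hb Hc Hd E1 E2.
have de := @comm_e R star Hs a b d c Ha Hb Hd Hc E2 E1.
have db := @comm_b R star Hs a b d c Ha Hb Hd Hc E2 E1.
have ab := @herm_comm R star Hs a b Ha Hb.
have [H1 H2 H3 H4] := Hb.
split.
- have -> : c*a*(b*c)*(c*a) = c*(a*b*(c*c*a)) by rewrite !mulrA.
  by rewrite Hcc E1 (mulrA (a*b) a d) H1 -E1 mulrA Hcc.
- have -> : b*c*(c*a)*(b*c) = b*(c*c*a)*(b*c) by rewrite !mulrA.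
  rewrite Hcc E1.
  have -> : b*(a*d)*(b*c) = b*a*(d*b)*c by rewrite !mulrA.
  by rewrite db !mulrA H2 -mulrA Hcc.
- have xx : c*a*(b*c) = a*b*c.
    by rewrite E1 mulrA -(mulrA a d b) db !mulrA -(mulrA _ c c) Hcc.
  by rewrite xx (@sM _ _ Hs) H3 Hc ce.
- have yy : b*c*(c*a) = a*b*d.
    have -> : b*c*(c*a) = b*(c*c*a) by rewrite !mulrA.
    by rewrite Hcc E1 mulrA ab.
  by rewrite yy (@sM _ _ Hs) H3 Hd de.
Qed.

Lemma MP_neg u v : is_MP_inverse star u v -> is_MP_inverse star (-u) (-v).
Proof. by case=> H1 H2 H3 H4; split; rewrite ?mulrNN ?mulrN ?H1 ?H2 ?H3 ?H4. Qed.

Lemma K1 u u' v : is_MP_inverse star u u' -> star u * v = 0 -> u' * v = 0.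
Proof.
case=> H1 H2 H3 H4 h.
have e : u' = u' * star u' * star u by rewrite -mulrA -(@sM _ _ Hs) H3 mulrA H2.
by rewrite {1}e -mulrA h mulr0.
Qed.

Lemma K2 u u' v : is_MP_inverse star u u' -> v * star u = 0 -> v * u' = 0.
Proof.
case=> H1 H2 H3 H4 h.
have e : u' = star u * star u' * u' by rewrite -(@sM _ _ Hs) H4 H2.
by rewrite {1}e !mulrA h !mul0r.
Qed.

Lemma MP_sum u u' v v' : is_MP_inverse star u u' -> is_MP_inverse star v v' ->
  star u * v = 0 -> u * star v = 0 -> is_MP_inverse star (u + v) (u' + v').
Proof.
move=> Hu Hv o1 o2.
have a1 : u' * v = 0 := K1 _ _ _ Hu o1.
have a2 : v * u' = 0.
  apply: (K2 _ _ _ Hu). by rewrite -(@sK _ _ Hs v) -(@sM _ _ Hs) o2 (@s0 _ _ Hs) .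
have a3 : v' * u = 0.
  apply: (K1 _ _ _ Hv). by rewrite -(@sK _ _ Hs u) -(@sM _ _ Hs) o1 (@s0 _ _ Hs).
have a4 : u * v' = 0 := K2 _ _ _ Hv o2.
have [H1 H2 H3 H4] := Hu.
have [G1 G2 G3 G4] := Hv.
have m1 : (u + v) * (u' + v') = u * u' + v * v'.
  by rewrite mulrDl !mulrDr a4 a2 addr0 add0r.
have m2 : (u' + v') * (u + v) = u' * u + v' * v.
  by rewrite mulrDl !mulrDr a1 a3 addr0 add0r.
split.
- rewrite m1 mulrDl !mulrDr -(mulrA u u' v) a1 -(mulrA v v' u) a3 !mulr0 addr0 add0r.
  by rewrite H1 G1.
- rewrite m2 mulrDl !mulrDr -(mulrA u' u v') a4 -(mulrA v' v u') a2 !mulr0 addr0 add0r.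
  by rewrite H2 G2.
- by rewrite m1 (@sD _ _ Hs) H3 G3.
- by rewrite m2 (@sD _ _ Hs) H4 G4.
Qed.
End T.

Lemma I1 (R : pzRingType) (p q : R) : p * p = p -> q * q = q ->
  p * (p - q) = (p - q) * (1 - q).
Proof.
move=> Pp Qq; rewrite !mulrBr !mulrBl !mulr1 Pp Qq.
by rewrite opprB addrA subrK.
Qed.

Lemma I2 (R : pzRingType) (p q : R) : p * p = p -> q * q = q ->
  (1 - q) * (p - q) = (p - q) * p.
Proof.
move=> Pp Qq; rewrite !mulrBr !mulrBl !mul1r Pp Qq.
by rewrite subrr subr0.
Qed.

Theorem theorem2p7 (R : pzRingType) (star : R -> R) (p q : R) :
  involution star -> projection star p -> projection star q ->
  ((MP_invertible star (p * (1 - q)) /\ MP_invertible star ((1 - p) * q))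
   <-> MP_invertible star (p - q)).
Proof.
move=> Hs [Pp Sp] [Qq Sq].
have sB' := @sB R star Hs.
have s1' := @s1 R star Hs.
have sM' := @sM R star Hs.
have S1q : star (1 - q) = 1 - q by rewrite sB' s1' Sq.
have S1p : star (1 - p) = 1 - p by rewrite sB' s1' Sp.
have p1p : p * (1 - p) = 0 by rewrite mulrBr mulr1 Pp subrr.
have q1q : (1 - q) * q = 0 by rewrite mulrBl mul1r Qq subrr.
split.
- case=> [[x Hx] [y Hy]].
  have e : p - q = p * (1 - q) + - ((1 - p) * q).
    by rewrite mulrBr mulrBl mulr1 mul1r opprB addrA subrK.
  rewrite e; exists (x + - y).
  apply: (@MP_sum R star Hs _ _ _ _ Hx (@MP_neg R star _ _ Hy)).
  + rewrite sM' S1q Sp mulrN !mulrA -(mulrA _ p (1 - p)) p1p mulr0 mul0r oppr0 //.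
  + rewrite (@sN R star Hs) sM' S1p Sq mulrN !mulrA -(mulrA p (1 - q) q) q1q.
    by rewrite mulr0 mul0r oppr0.
- case=> b Hb.
  have Ha : star (p - q) = p - q by rewrite sB' Sp Sq.
  split.
  + have -> : p * (1 - q) = p * (p - q) by rewrite !mulrBr mulr1 Pp.
    exists (b * p).
    apply: (@MP_cut R star Hs _ _ _ _ Ha Hb Sp S1q Pp (I1 _ _ _ Pp Qq) (I2 _ _ _ Pp Qq)).
  + have -> : (1 - p) * q = (1 - p) * (q - p).
      by rewrite mulrBr [(1 - p) * p]mulrBl mul1r Pp subrr subr0.
    exists (b * (1 - p) * 0 + - b * (1 - p)).
    rewrite mulr0 add0r.
    have Ha' : star (q - p) = q - p by rewrite sB' Sp Sq.
    have Hb' : is_MP_inverse star (q - p) (- b).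
      by rewrite -opprB; apply: (@MP_neg R star _ _ Hb).
    have Pp1 : (1 - p) * (1 - p) = 1 - p.
      by rewrite mulrBr mulr1 mulrBl mul1r Pp subrr subr0.
    apply: (@MP_cut R star Hs _ _ _ _ Ha' Hb' S1p Sq Pp1 (I2 _ _ _ Qq Pp) (I1 _ _ _ Qq Pp)).
Qed.
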